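(* Let $a\in\mathbb{C}$ with $|a|\le 1$ and let $m$ be a positive integer. Let $\omega_\pm(\cdot,m)$ be real-analytic functions of $\theta\in\mathbb{R}$ satisfying $$\cos(\omega_\pm(\theta,m))=\begin{cases}|a|^m\cos(m(\theta+\arg a)), & m\text{ odd},\\ -|a|^m\cos(m(\theta+\arg a))+(-1)^{m/2}(|a|^m-1), & m\text{ even}.\end{cases}$$ Then $$\max_{\theta}|\partial_\theta\omega_\pm(\theta,m)|=\begin{cases} m|a|^m, & m\text{ odd},\\ m|a|^{m/2}, & m\text{ even}.\end{cases}$$
   Context: The functions $\omega_\pm(\theta,m)$ are the dispersion relations (eigenphases of the Fourier symbol) of the $m$-th power of an electric shift-coin quantum walk with coin $\begin{bmatrix}a&b\\-\bar b&\bar a\end{bmatrix}$, $|a|^2+|b|^2=1$; analytic choices of these eigenphase functions exist. *)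

(* Defs.v *)
From Stdlib Require Import Reals.
From Coquelicot Require Import Coquelicot.
Open Scope R_scope.

Definition real_analytic (f : R -> R) : Prop :=
  forall x : R, exists (c : nat -> R) (r : R), 0 < r /\
    forall y : R, Rabs (y - x) < r -> is_pseries c (y - x) (f y).

(* phi is an argument of a:  a = |a| e^{i phi}  (any phi if a = 0). *)
Definition is_arg (a : C) (phi : R) : Prop :=
  a = (Cmod a * cos phi, Cmod a * sin phi)%R.

Definition cos_omega_rhs (a : C) (phi : R) (m : nat) (theta : R) : R :=
  if Nat.odd m then Cmod a ^ m * cos (INR m * (theta + phi))
  else - (Cmod a ^ m) * cos (INR m * (theta + phi))
       + (-1) ^ (m / 2) * (Cmod a ^ m - 1).

Definition max_speed (a : C) (m : nat) : R :=
  if Nat.odd m then INR m * Cmod a ^ m else INR m * Cmod a ^ (m / 2).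

(* Main.v *)
Require Import Defs.
From Stdlib Require Import Reals Lra Lia.
From Coquelicot Require Import Coquelicot.
Open Scope R_scope.
Lemma analytic_ex_derive (f : R -> R) : real_analytic f -> forall x, ex_derive f x.
Proof.
  intros Hf x. destruct (Hf x) as [c [r [Hr Hs]]].
  assert (Hrad : Rbar_lt (Rabs 0) (CV_radius c)).
  { assert (H2 : is_pseries c (r/2) (f (x + r/2))).
    { replace (r/2) with (x + r/2 - x) at 1 by ring. apply Hs.
      replace (x + r/2 - x) with (r/2) by ring. rewrite Rabs_pos_eq; lra. }
    assert (Hex : ex_series (fun k => scal (pow_n (r/2) k) (c k))) by (eexists; exact H2).
    apply ex_series_lim_0 in Hex.
    destruct (filterlim_bounded _ (ex_intro _ 0 Hex)) as [M HM].
    destruct (CV_radius_bounded c) as [Hub _].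
    apply Rbar_lt_le_trans with (Finite (r/2)).
    { rewrite Rabs_R0. simpl. lra. }
    apply Hub. exists M. intros n. specialize (HM n).
    rewrite pow_n_pow in HM. unfold scal in HM; simpl in HM. unfold mult in HM; simpl in HM.
    unfold norm in HM; simpl in HM. unfold abs in HM; simpl in HM. rewrite Rmult_comm. exact HM. }
  apply ex_derive_ext_loc with (fun y => PSeries c (y - x)).
  { assert (Hr' : 0 < r) by exact Hr. exists (mkposreal r Hr'). intros y Hy.
    apply is_pseries_unique. apply Hs. exact Hy. }
  apply (ex_derive_comp (PSeries c) (fun y => y - x)).
  - rewrite Rminus_diag. apply ex_derive_PSeries. exact Hrad.
  - auto_derive. auto.
Qed.
Lemma sq_deriv f g x lf lg : f x = 0 -> g x = 0 -> (forall y, Rabs (f y) = Rabs (g y)) ->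
  derivable_pt_lim f x lf -> derivable_pt_lim g x lg -> Rabs lf = Rabs lg.
Proof.
  intros Hf0 Hg0 Hfg Hf Hg.
  destruct (Req_dec (Rabs lf) (Rabs lg)) as [|Hne]; auto. exfalso.
  set (e := Rabs (Rabs lf - Rabs lg) / 2).
  assert (He : 0 < e). { unfold e. assert (0 < Rabs (Rabs lf - Rabs lg)) by (apply Rabs_pos_lt; lra). lra. }
  destruct (Hf e He) as [d1 Hd1]. destruct (Hg e He) as [d2 Hd2].
  set (h := Rmin d1 d2 / 2).
  assert (Hh : 0 < h). { unfold h. pose proof (cond_pos d1); pose proof (cond_pos d2).
    apply Rmin_case; lra. }
  assert (Hh1 : Rabs h < d1). { rewrite Rabs_pos_eq by lra. unfold h.
    pose proof (Rmin_l d1 d2); pose proof (cond_pos d1); pose proof (cond_pos d2).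
    assert (0 < Rmin d1 d2) by (apply Rmin_case; lra). lra. }
  assert (Hh2 : Rabs h < d2). { rewrite Rabs_pos_eq by lra. unfold h.
    pose proof (Rmin_r d1 d2); pose proof (cond_pos d1); pose proof (cond_pos d2).
    assert (0 < Rmin d1 d2) by (apply Rmin_case; lra). lra. }
  specialize (Hd1 h ltac:(lra) Hh1). specialize (Hd2 h ltac:(lra) Hh2).
  rewrite Hf0 in Hd1. rewrite Hg0 in Hd2.
  set (p := (f (x + h) - 0) / h) in *. set (q := (g (x + h) - 0) / h) in *.
  assert (Hpq : Rabs p = Rabs q).
  { unfold p, q. rewrite !Rminus_0_r, !Rabs_div by lra. rewrite Hfg. reflexivity. }
  assert (Ha : Rabs (Rabs lf - Rabs q) < e).
  { rewrite <- Hpq. eapply Rle_lt_trans; [apply Rabs_triang_inv2|]. rewrite Rabs_minus_sym. exact Hd1. }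
  assert (Hb : Rabs (Rabs q - Rabs lg) < e).
  { eapply Rle_lt_trans; [apply Rabs_triang_inv2|]. exact Hd2. }
  assert (H1 : Rabs (Rabs lf - Rabs lg) <= Rabs (Rabs lf - Rabs q) + Rabs (Rabs q - Rabs lg)).
  { replace (Rabs lf - Rabs lg) with ((Rabs lf - Rabs q) + (Rabs q - Rabs lg)) by ring.
    apply Rabs_triang. }
  unfold e in *. lra.
Qed.

Lemma lemL (w : R -> R) (x0 K mr : R) : ex_derive w x0 -> sin (w x0) = 0 -> 0 <= K ->
  (forall x, 1 - cos (w x0) * cos (w x) = K * (1 - cos (mr * (x - x0)))) ->
  (Derive w x0)^2 = K * mr^2.
Proof.
  intros Hd Hs HK Hid.
  assert (Hf : is_derive (fun x => sin ((w x - w x0)/2)) x0 (Derive w x0 / 2)).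
  { auto_derive. auto. rewrite Rplus_opp_r, Rmult_0_l, cos_0. change (fun x : R => w x) with w. unfold Rdiv; ring. }
  assert (Hg : is_derive (fun x => sqrt K * sin (mr * (x - x0) / 2)) x0 (sqrt K * mr / 2)).
  { auto_derive. auto. rewrite Rplus_opp_r, Rmult_0_r, Rmult_0_l, cos_0. unfold Rdiv; ring. }
  apply is_derive_Reals in Hf. apply is_derive_Reals in Hg.
  assert (Z1 : sin ((w x0 - w x0)/2) = 0) by (rewrite Rminus_diag; unfold Rdiv; rewrite Rmult_0_l; apply sin_0).
  assert (Z2 : sqrt K * sin (mr * (x0 - x0) / 2) = 0) by (rewrite Rminus_diag, Rmult_0_r; unfold Rdiv; rewrite Rmult_0_l, sin_0; ring).
  assert (Habs : forall y, Rabs (sin ((w y - w x0)/2)) = Rabs (sqrt K * sin (mr * (y - x0) / 2))).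
  { intros y. apply Rsqr_eq_abs_0. unfold Rsqr.
    assert (Hsq : forall z, sin (z/2) * sin (z/2) = (1 - cos z)/2).
    { intros z. pose proof (cos_2a_sin (z/2)). replace (2 * (z/2)) with z in H by field. lra. }
    rewrite Hsq. replace (sqrt K * sin (mr * (y - x0) / 2) * (sqrt K * sin (mr * (y - x0) / 2)))
      with ((sqrt K * sqrt K) * (sin (mr * (y - x0) / 2) * sin (mr * (y - x0) / 2))) by ring.
    rewrite Hsq, sqrt_sqrt by lra. rewrite cos_minus, Hs. specialize (Hid y). nra. }
  assert (H := sq_deriv (fun x => sin ((w x - w x0)/2)) (fun x => sqrt K * sin (mr * (x - x0) / 2)) _ _ _ Z1 Z2 Habs Hf Hg).
  assert (H2 : (Derive w x0 / 2)^2 = (sqrt K * mr / 2)^2).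
    { rewrite <- (pow2_abs (Derive w x0 / 2)), <- (pow2_abs (sqrt K * mr / 2)), H. reflexivity. }
    replace ((sqrt K * mr / 2)^2) with ((sqrt K * sqrt K) * mr^2 / 4) in H2 by (field).
    rewrite sqrt_sqrt in H2 by lra. lra.
Qed.

Lemma odd_point (w : R -> R) (B mr phi th : R) :
  (forall x, ex_derive w x) -> 0 <= B <= 1 ->
  (forall x, cos (w x) = B * cos (mr * (x + phi))) ->
  sin (w th) * Derive w th = B * mr * sin (mr * (th + phi)) ->
  (Derive w th)^2 <= B^2 * mr^2 /\
  (cos (mr * (th + phi)) = 0 -> (Derive w th)^2 = B^2 * mr^2).
Proof.
  intros Hex HB Hc Hd.
  pose proof (sin2_cos2 (w th)) as Pw. pose proof (sin2_cos2 (mr * (th + phi))) as Pu.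
  unfold Rsqr in Pw, Pu. rewrite Hc in Pw.
  set (D := Derive w th) in *. set (sw := sin (w th)) in *.
  set (c := cos (mr * (th + phi))) in *. set (s := sin (mr * (th + phi))) in *.
  assert (ED : D = Derive w th) by reflexivity. assert (Esw : sw = sin (w th)) by reflexivity.
  assert (Ec : c = cos (mr * (th + phi))) by reflexivity. assert (Es : s = sin (mr * (th + phi))) by reflexivity.
  clearbody D sw c s.
  assert (Hsq : sw^2 * D^2 = B^2 * mr^2 * s^2).
  { replace (sw^2 * D^2) with ((sw * D)^2) by ring. rewrite Hd. ring. }
  split.
  - destruct (Req_dec sw 0) as [Hz|Hnz].
    + assert (HB1 : B = 1).
      { rewrite Hz in Pw. assert (B*B*(c*c) = 1) by nra. nra. }
      assert (Hc2 : c * c = 1). { rewrite HB1, Hz in Pw. nra. }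
      assert (Hs0 : s = 0) by nra.
      assert (HL := lemL w th 1 mr (Hex th) ltac:(rewrite <- Esw; exact Hz) ltac:(lra)).
      rewrite <- ED in HL. rewrite HB1. rewrite HL. lra.
      intros x. rewrite !Hc, HB1.
      replace (mr * (x + phi)) with (mr * (th + phi) + mr * (x - th)) by ring.
      rewrite cos_plus, <- Ec, <- Es, Hs0. transitivity (1 - (c*c) * cos (mr*(x-th))); [ring|]. rewrite Hc2; ring.
    + assert (0 < sw^2) by (apply pow2_gt_0; auto).
      assert (sw^2 = 1 - B*B*c*c) by nra.
      assert (s^2 = 1 - c*c) by nra.
      assert (B^2 * mr^2 * s^2 <= B^2 * mr^2 * sw^2).
      { apply Rmult_le_compat_l. nra.
        assert (0 <= (c*c) * (1 - B*B)) by (apply Rmult_le_pos; nra). nra. }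
      nra.
  - intros Hc0. rewrite Hc0 in Pw, Pu. assert (Hw1 : sw^2 = 1) by nra.
    assert (Hs1 : s^2 = 1) by nra.
    rewrite Hw1, Hs1 in Hsq. lra.
Qed.

Lemma even_point (w : R -> R) (B sg mr phi th : R) :
  (forall x, ex_derive w x) -> 0 <= B <= 1 -> (sg = 1 \/ sg = -1) ->
  (forall x, cos (w x) = - B * cos (mr * (x + phi)) + sg * (B - 1)) ->
  sin (w th) * Derive w th = - (B * mr * sin (mr * (th + phi))) ->
  (Derive w th)^2 <= B * mr^2 /\
  (sin (w th) = 0 -> (Derive w th)^2 = B * mr^2).
Proof.
  intros Hex HB Hsg Hc Hd.
  assert (Hsg2 : sg * sg = 1) by (destruct Hsg; subst; ring).
  pose proof (sin2_cos2 (w th)) as Pw. pose proof (sin2_cos2 (mr * (th + phi))) as Pu.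
  unfold Rsqr in Pw, Pu. rewrite Hc in Pw.
  set (D := Derive w th) in *. set (sw := sin (w th)) in *.
  set (c := cos (mr * (th + phi))) in *. set (s := sin (mr * (th + phi))) in *.
  assert (ED : D = Derive w th) by reflexivity. assert (Esw : sw = sin (w th)) by reflexivity.
  assert (Ec : c = cos (mr * (th + phi))) by reflexivity. assert (Es : s = sin (mr * (th + phi))) by reflexivity.
  clearbody D sw c s.
  set (t := 1 - sg * c).
  assert (Et : t = 1 - sg * c) by reflexivity. clearbody t.
  assert (Hcw : - B * c + sg * (B - 1) = sg * (B * t - 1)).
  { rewrite Et. transitivity (sg * B - (sg*sg) * B * c - sg); [|ring]. rewrite Hsg2. ring. }
  rewrite Hcw in Pw.
  assert (Pw' : sw * sw + (B * t - 1) * (B * t - 1) = 1).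
  { assert (E : sw * sw + sg * (B * t - 1) * (sg * (B * t - 1)) = sw * sw + (sg*sg) * ((B * t - 1) * (B * t - 1))) by ring. rewrite Hsg2 in E. lra. }
  assert (Hcc : c * c = (1 - t) * (1 - t)).
  { transitivity ((sg*sg) * c * c); [rewrite Hsg2; ring|]. rewrite Et. ring. }
  assert (Ht : 0 <= t <= 2) by nra.
  assert (Hsq : sw^2 * D^2 = B^2 * mr^2 * s^2).
  { replace (sw^2 * D^2) with ((sw * D)^2) by ring. rewrite Hd. ring. }
  assert (Hzero : sw = 0 -> D^2 = B * mr^2).
  { intros Hz. rewrite Hz in Pw'.
    assert (Hprod : (B * t) * (B * t - 2) = 0) by nra.
    assert (HL := lemL w th B mr (Hex th) ltac:(rewrite <- Esw; exact Hz) ltac:(lra)).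
    rewrite <- ED in HL. apply HL. intros x. rewrite !Hc.
    replace (mr * (x + phi)) with (mr * (th + phi) + mr * (x - th)) by ring.
    rewrite cos_plus, <- Ec, <- Es. rewrite Hcw.
    set (cy := cos (mr * (x - th))). set (sy := sin (mr * (x - th))).
    apply Rmult_integral in Hprod. destruct Hprod as [H0 | H2].
    - destruct (Req_dec B 0) as [HB0 | HBn].
      + rewrite HB0. transitivity (1 - sg * sg); [ring|]. rewrite Hsg2. ring.
      + assert (Ht0 : t = 0) by (apply (Rmult_eq_reg_l B); [lra|auto]).
        assert (Hc1 : c = sg) by (transitivity ((sg * sg) * c); [rewrite Hsg2; ring|]; rewrite Et in Ht0; nra).
        assert (Hs0 : s = 0) by (rewrite Ht0 in Hcc; nra).
        rewrite Ht0, Hc1, Hs0. transitivity (1 + (sg*sg) * (- B * cy + (B - 1))); [ring|]. rewrite Hsg2. ring.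
    - assert (HB1 : B = 1) by nra.
      assert (Ht2 : t = 2) by nra.
      assert (Hc1 : c = - sg) by (transitivity ((sg * sg) * c); [rewrite Hsg2; ring|]; rewrite Et in Ht2; nra).
      assert (Hs0 : s = 0) by (rewrite Ht2 in Hcc; nra).
      rewrite HB1, Ht2, Hc1, Hs0. transitivity (1 - (sg*sg) * cy); [ring|]. rewrite Hsg2. ring. }
  split; [| exact Hzero].
  destruct (Req_dec sw 0) as [Hz|Hnz].
  - rewrite (Hzero Hz). lra.
  - assert (0 < sw^2) by (apply pow2_gt_0; auto).
    assert (Hsw2 : sw^2 = B * t * (2 - B * t)) by nra.
    assert (Hs2 : s^2 = t * (2 - t)) by nra.
    assert (Hk : B^2 * mr^2 * s^2 <= B * mr^2 * sw^2).
    { rewrite Hsw2, Hs2.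
      assert (0 <= mr^2 * (B * B * (t * t) * (1 - B))).
      { apply Rmult_le_pos. nra. apply Rmult_le_pos; nra. }
      nra. }
    nra.
Qed.

Lemma finish (D : R -> R) (M : R) : 0 <= M -> (exists t0, D t0 ^ 2 = M ^ 2) ->
  (forall t, D t ^ 2 <= M ^ 2) ->
  (exists t0, Rabs (D t0) = M) /\ (forall t, Rabs (D t) <= M).
Proof.
  intros HM [t0 Ht0] Hall. split.
  - exists t0. rewrite <- (pow2_abs (D t0)) in Ht0. pose proof (Rabs_pos (D t0)).
    assert ((Rabs (D t0) - M) * (Rabs (D t0) + M) = 0) by nra.
    apply Rmult_integral in H0. destruct H0; nra.
  - intros t. specialize (Hall t). rewrite <- (pow2_abs (D t)) in Hall. pose proof (Rabs_pos (D t)). nra.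
Qed.

Theorem lemma3p1 (a : C) (phi : R) (m : nat) (omega : R -> R) :
  Cmod a <= 1 -> is_arg a phi -> (0 < m)%nat ->
  real_analytic omega ->
  (forall theta : R, cos (omega theta) = cos_omega_rhs a phi m theta) ->
  (exists theta0 : R, Rabs (Derive omega theta0) = max_speed a m) /\
  (forall theta : R, Rabs (Derive omega theta) <= max_speed a m).
Proof.
  intros Ha _ Hm Han Hcos.
  pose proof (analytic_ex_derive omega Han) as Hex.
  pose proof (Cmod_ge_0 a) as Ha0.
  assert (Hmpos : 0 < INR m) by (apply lt_0_INR; apply Nat.ltb_lt in Hm; apply Nat.ltb_lt; auto).
  assert (Hderiv : forall th, - sin (omega th) * Derive omega th =
     (if Nat.odd m then - (Cmod a ^ m * INR m * sin (INR m * (th + phi)))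
      else Cmod a ^ m * INR m * sin (INR m * (th + phi)))).
  { intros th.
    assert (H1 : is_derive (fun t => cos (omega t)) th (- sin (omega th) * Derive omega th)).
    { auto_derive. auto. change (fun x : R => omega x) with omega. ring. }
    assert (H2 : is_derive (cos_omega_rhs a phi m) th (if Nat.odd m then - (Cmod a ^ m * INR m * sin (INR m * (th + phi))) else Cmod a ^ m * INR m * sin (INR m * (th + phi)))).
    { unfold cos_omega_rhs. destruct (Nat.odd m); auto_derive; auto; ring. }
    apply is_derive_ext with (g := fun t => cos (omega t)) in H2; [| intros; symmetry; apply Hcos].
    apply is_derive_unique in H1. apply is_derive_unique in H2. rewrite <- H1. exact H2. }
  set (B := Cmod a ^ m).
  assert (HB : 0 <= B <= 1).
  { unfold B. split. apply pow_le; auto. rewrite <- (pow1 m). apply pow_incr. lra. }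
  unfold max_speed. destruct (Nat.odd m) eqn:Hodd.
  -
    assert (Hc : forall x, cos (omega x) = B * cos (INR m * (x + phi))).
    { intros x. rewrite Hcos. unfold cos_omega_rhs. rewrite Hodd. reflexivity. }
    assert (Hd : forall th, sin (omega th) * Derive omega th = B * INR m * sin (INR m * (th + phi))).
    { intros th. specialize (Hderiv th). unfold B. lra. }
    apply (finish (Derive omega)).
    + fold B. apply Rmult_le_pos; lra.
    + exists (PI / 2 / INR m - phi).
      destruct (odd_point omega B (INR m) phi (PI / 2 / INR m - phi) Hex HB Hc (Hd _)) as [_ H].
      fold B. rewrite H. ring.
      replace (INR m * (PI / 2 / INR m - phi + phi)) with (PI/2) by (field; lra). apply cos_PI2.
    + intros th. destruct (odd_point omega B (INR m) phi th Hex HB Hc (Hd _)) as [H _].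
      fold B. replace ((INR m * B)^2) with (B^2 * INR m ^2) by ring. exact H.
  -
    set (sg := (-1) ^ (m / 2)).
    assert (Hsg : sg = 1 \/ sg = -1).
    { pose proof (pow_1_abs (m / 2)) as P. fold sg in P. unfold Rabs in P.
      destruct (Rcase_abs sg); lra. }
    assert (Hc : forall x, cos (omega x) = - B * cos (INR m * (x + phi)) + sg * (B - 1)).
    { intros x. rewrite Hcos. unfold cos_omega_rhs. rewrite Hodd. reflexivity. }
    assert (Hd : forall th, sin (omega th) * Derive omega th = - (B * INR m * sin (INR m * (th + phi)))).
    { intros th. specialize (Hderiv th). unfold B. lra. }
    assert (HM2 : (INR m * Cmod a ^ (m / 2)) ^ 2 = B * INR m ^ 2).
    { assert (Hev : Nat.even m = true) by (rewrite <- Nat.negb_odd, Hodd; reflexivity).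
      apply Nat.even_spec in Hev. destruct Hev as [k Hk].
      unfold B. subst m. replace ((2 * k) / 2)%nat with k by (rewrite Nat.mul_comm, Nat.div_mul; lia).
      replace (2 * k)%nat with (k * 2)%nat by lia. rewrite pow_mult. ring. }
    apply (finish (Derive omega)).
    + apply Rmult_le_pos; [lra|]. apply pow_le; auto.
    + rewrite HM2. destruct Hsg as [Hs1 | Hs1].
      * exists (- phi). destruct (even_point omega B sg (INR m) phi (- phi) Hex HB ltac:(auto) Hc (Hd _)) as [_ H].
        apply H. pose proof (sin2_cos2 (omega (-phi))) as P. unfold Rsqr in P.
        rewrite Hc, Hs1 in P. replace (INR m * (- phi + phi)) with 0 in P by ring. rewrite cos_0 in P. nra.
      * exists (PI / INR m - phi). destruct (even_point omega B sg (INR m) phi (PI / INR m - phi) Hex HB ltac:(auto) Hc (Hd _)) as [_ H].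
        apply H. pose proof (sin2_cos2 (omega (PI / INR m - phi))) as P. unfold Rsqr in P.
        rewrite Hc, Hs1 in P. replace (INR m * (PI / INR m - phi + phi)) with PI in P by (field; lra). rewrite cos_PI in P. nra.
    + intros th. rewrite HM2. destruct (even_point omega B sg (INR m) phi th Hex HB Hsg Hc (Hd _)) as [H _]. exact H.
Qed.
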